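(* The Petersen graph $P$ satisfies $\mathcal{C}_f(P)=4$.
   Context: All graphs are finite and simple; $G=(V,E)$, $N(v)$ is the open neighborhood of $v$. The Petersen graph is the cubic graph on 10 vertices whose vertices are the 2-element subsets of $\{1,\dots,5\}$, two being adjacent iff they are disjoint. A dominating set is $D\subseteq V$ such that every vertex of $V\setminus D$ has a neighbor in $D$. For an integer $k\geq 1$, a $k$-fair dominating set is a dominating set $D$ such that $|N(v)\cap D|=k$ for every $v\in V\setminus D$. A fair dominating set is a $k$-fair dominating set for some integer $k\geq 1$. A fair coalition consists of two disjoint sets $A_1,A_2\subseteq V$, neither of which is a fair dominating set, such that $A_1\cup A_2$ is a fair dominating set. A fair coalition partition ($fc$-partition) of $G$ is a partition $\Upsilon=\{A_1,\dots,A_k\}$ of $V$ such that every $A_i$ is either a singleton fair dominating set of $G$, or is not a fair dominating set and forms a fair coalition with some other non-fair-dominating set $A_j\in\Upsilon$. The fair coalition number $\mathcal{C}_f(G)$ is the maximum number of parts of an $fc$-partition of $G$. *)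

(* Defs.v *)
From mathcomp Require Import all_boot.
Set Implicit Arguments. Unset Strict Implicit. Unset Printing Implicit Defensive.

Section FairCoalitions.
Variables (T : finType) (e : rel T).

Definition nbhd (v : T) : {set T} := [set u | e v u].

Definition dominating (D : {set T}) : Prop :=
  forall v, v \notin D -> exists2 u, u \in D & e v u.

Definition k_fair_dominating (k : nat) (D : {set T}) : Prop :=
  dominating D /\ forall v, v \notin D -> #|nbhd v :&: D| = k.

Definition fair_dominating (D : {set T}) : Prop :=
  exists k, 1 <= k /\ k_fair_dominating k D.

Definition fair_coalition (A1 A2 : {set T}) : Prop :=
  [disjoint A1 & A2] /\ ~ fair_dominating A1 /\ ~ fair_dominating A2 /\
  fair_dominating (A1 :|: A2).

Definition fc_partition (P : {set {set T}}) : Prop :=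
  partition P [set: T] /\
  forall A, A \in P ->
    (#|A| = 1 /\ fair_dominating A) \/
    (~ fair_dominating A /\ exists2 B, B \in P & B != A /\ fair_coalition A B).

Definition is_fair_coalition_number (n : nat) : Prop :=
  (exists P, fc_partition P /\ #|P| = n) /\
  (forall P, fc_partition P -> #|P| <= n).
End FairCoalitions.

Definition petersen_vertex := {A : {set 'I_5} | #|A| == 2}.
Definition petersen_adj : rel petersen_vertex :=
  fun x y => [disjoint val x & val y].

(* Main.v *)
Require Import Defs.
From mathcomp Require Import all_boot.
Set Implicit Arguments. Unset Strict Implicit. Unset Printing Implicit Defensive.

Definition adjn : seq (seq bool) := [::[::false; false; false; false; false; false; false; true; true; true]; [::false; false; false; false; false; true; true; false; false; true]; [::false; false; false; false; true; false; true; false; true; false]; [::false; false; false; false; true; true; false; true; false; false]; [::false; false; true; true; false; false; false; false; false; true]; [::false; true; false; true; false; false; false; false; true; false]; [::false; true; true; false; false; false; false; true; false; false]; [::true; false; false; true; false; false; true; false; false; false]; [::true; false; true; false; false; true; false; false; false; false]; [::true; true; false; false; true; false; false; false; false; false]].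

Definition adjb (v u : nat) : bool := nth false (nth [::] adjn v) u.

Fixpoint orm (u v : seq bool) : seq bool :=
  match u, v with a :: u', b :: v' => (a || b) :: orm u' v' | _, _ => [::] end.
Fixpoint dism (u v : seq bool) : bool :=
  match u, v with a :: u', b :: v' => ~~ (a && b) && dism u' v' | _, _ => true end.
Fixpoint subs (c : seq bool) : seq (seq bool) :=
  match c with
  | [::] => [:: [::]]
  | b :: c' => let r := subs c' in
      if b then map (cons false) r ++ map (cons true) r else map (cons false) r
  end.

Definition nbrs : seq (seq nat) := [seq [seq u <- iota 0 10 | adjb v u] | v <- iota 0 10].
Definition nbc (M : seq bool) (v : nat) : nat :=
  count (fun u => adjb v u && nth false M u) (iota 0 10).
Definition cs (M : seq bool) : seq nat :=
  [seq nbc M v | v <- iota 0 10 & ~~ nth false M v].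
Definition fdm (M : seq bool) : bool :=
  let c := cs M in all (fun x => (x == head 0 c) && (0 < x)) c.

Inductive tr := Lf of bool | Nd of tr & tr.
Fixpoint bt (n : nat) (pref : seq bool) : tr :=
  match n with 0 => Lf (fdm (rev pref)) | n'.+1 => Nd (bt n' (false :: pref)) (bt n' (true :: pref)) end.
Fixpoint lookup (t : tr) (M : seq bool) : bool :=
  match t, M with Nd l r, b :: M' => lookup (if b then r else l) M' | Lf b, _ => b | _, _ => false end.

Definition okb (f : seq bool -> bool) (B : seq (seq bool)) (A : seq bool) : bool :=
  (f A && (count id A == 1)) ||
  (~~ f A && has (fun C => (C != A) && ~~ f C && f (orm A C)) B).
Definition chkf f (B : seq (seq bool)) : bool := (size B < 5) || ~~ all (okb f B) B.

Fixpoint search (chk : seq (seq bool) -> bool) (n : nat) (used : seq bool) (blocks : seq (seq bool)) : bool :=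
  match n with
  | 0 => false
  | n'.+1 =>
    if all id used then chk blocks else
    let i := find negb used in
    all (fun S => search chk n' (orm used S) (S :: blocks))
        [seq S <- subs (map negb used) | nth false S i]
  end.

Definition full0 := nseq 10 false.

Lemma size_orm u v : size u = size v -> size (orm u v) = size u.
Proof. elim: u v => [|a u IH] [|b v] //= [] H; by rewrite IH. Qed.

Lemma nth_orm u v k : size u = size v ->
  nth false (orm u v) k = nth false u k || nth false v k.
Proof.
elim: u v k => [|a u IH] [|b v] [|k] //= [H]; by rewrite ?IH.
Qed.

Lemma mem_subs c S : size S = size c -> (forall k, nth false S k -> nth false c k) ->
  S \in subs c.
Proof.
elim: c S => [|b c IH] [|a S] //= [Hs] H.
have HS : S \in subs c by apply: IH => // k; apply: (H k.+1).
case: b H => H; rewrite ?mem_cat; case: a H => H.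
- by apply/orP; right; apply/mapP; exists S.
- by apply/orP; left; apply/mapP; exists S.
- by have := H 0 isT.
- by apply/mapP; exists S.
Qed.

Lemma nth_true_lt (M : seq bool) k : nth false M k -> k < size M.
Proof. by apply: contraLR; rewrite -leqNgt => H; rewrite nth_default. Qed.

Section Sound.
Variable chk : seq (seq bool) -> bool.
Hypothesis Hc : forall B L, perm_eq B L -> chk B -> chk L.
Variable L : seq (seq bool).
Hypothesis HuL : uniq L.
Hypothesis Hsz : forall M, M \in L -> size M = 10.
Hypothesis Hne : forall M, M \in L -> exists k, nth false M k.
Hypothesis Hdis : forall M N, M \in L -> N \in L -> M != N ->
  forall k, nth false M k -> nth false N k -> False.
Hypothesis Hcov : forall k, k < 10 -> exists2 M, M \in L & nth false M k.

Lemma search_sound n used blocks :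
  search chk n used blocks -> size used = 10 -> {subset blocks <= L} -> uniq blocks ->
  (forall k, nth false used k = has (fun M => nth false M k) blocks) -> chk L.
Proof.
elim: n used blocks => // n IH used blocks /=.
case: ifP => [Hall | Hnall] Hs Hsu Hsub Hub Hinv.
  apply: (Hc _ Hs); apply: uniq_perm => // x; apply/idP/idP; first exact: Hsub.
  move=> xL; have [k Hk] := Hne xL.
  have Hk10 : k < 10 by rewrite -(Hsz xL); exact: nth_true_lt.
  have : nth false used k by apply: (all_nthP false Hall); rewrite Hsu.
  rewrite Hinv => /hasP [M MB HM].
  case: (eqVneq M x) => [<- //| Hne'].
  by case: (Hdis (Hsub _ MB) xL Hne' HM Hk).
have Hhas : has negb used by rewrite (has_predC id) Hnall.
set i := find negb used.
have Hi : i < 10 by rewrite -Hsu -has_find.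
have Hui : nth false used i = false.
  by apply: negbTE; exact: (nth_find false Hhas).
have [S SL HSi] := Hcov Hi.
have SnB : S \notin blocks.
  apply/negP => SB; move: Hui; rewrite Hinv => /negbT/negP; apply.
  by apply/hasP; exists S.
have Hdisj : forall k, nth false S k -> nth false used k = false.
  move=> k HSk; apply/negbTE/negP; rewrite Hinv => /hasP [M MB HM].
  have MS : M != S by apply/eqP => MS; rewrite -MS MB in SnB.
  exact: (Hdis (Hsub _ MB) SL MS HM HSk).
have HSsub : S \in [seq S <- subs (map negb used) | nth false S i].
  rewrite mem_filter HSi /=; apply: mem_subs; first by rewrite size_map Hsu Hsz.
  move=> k HSk; have Hk : k < size used by rewrite Hsu -(Hsz SL); exact: nth_true_lt.
  by rewrite (nth_map false) // Hdisj.
have := allP Hs _ HSsub => Hs'.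
apply: (IH _ _ Hs').
- by rewrite size_orm ?Hsu ?Hsz.
- by move=> x; rewrite inE => /orP [/eqP -> //|]; apply: Hsub.
- by rewrite /= SnB.
- by move=> k; rewrite nth_orm ?Hsu ?Hsz // Hinv /= orbC.
Qed.
End Sound.

Lemma chkf_perm f B L : perm_eq B L -> chkf f B -> chkf f L.
Proof.
move=> HBL; rewrite /chkf (perm_size HBL).
have HE := perm_mem HBL.
rewrite (eq_all_r HE); congr (_ || ~~ _); apply: eq_all => A.
by rewrite /okb (eq_has_r HE).
Qed.

Lemma chkf_ext f g L : (forall M, size M = 10 -> f M = g M) ->
  (forall M, M \in L -> size M = 10) -> chkf f L = chkf g L.
Proof.
move=> Hfg HL; rewrite /chkf; congr (_ || ~~ _); apply: eq_in_all => A AL.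
rewrite /okb Hfg ?HL //; congr (_ || (_ && _)); apply: eq_in_has => C CL.
have HA := HL _ AL; have HC := HL _ CL.
have HO : size (orm A C) = 10 by rewrite size_orm HA ?HC.
by rewrite !Hfg.
Qed.

Lemma lookup_bt n pref M : size M = n -> lookup (bt n pref) M = fdm (rev pref ++ M).
Proof.
elim: n pref M => [|n IH] pref [|b M] //=; first by rewrite cats0.
case=> HM; case: b; rewrite IH // rev_cons -cats1 -catA //.
Qed.

Lemma search_ok : search (chkf (lookup (bt 10 [::]))) 11 full0 [::].
Proof. vm_compute. reflexivity. Qed.

Lemma no_big L : uniq L -> (forall M, M \in L -> size M = 10) ->
  (forall M, M \in L -> exists k, nth false M k) ->
  (forall M N, M \in L -> N \in L -> M != N -> forall k, nth false M k -> nth false N k -> False) ->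
  (forall k, k < 10 -> exists2 M, M \in L & nth false M k) ->
  chkf fdm L.
Proof.
move=> HuL Hsz Hne Hdis Hcov.
rewrite -(@chkf_ext (lookup (bt 10 [::]))) //; last by move=> M HM; rewrite lookup_bt.
apply: (@search_sound _ (@chkf_perm _) L HuL Hsz Hne Hdis Hcov 11 full0 [::] search_ok) => //.
by move=> k; rewrite nth_nseq if_same.
Qed.

Notation T := petersen_vertex.
Notation e := petersen_adj.

Lemma disj2 (x y : 'I_5) (B : {set 'I_5}) :
  [disjoint [set x; y] & B] = (x \notin B) && (y \notin B).
Proof.
apply/idP/andP => [H | [Hx Hy]].
  by split; apply/negbT; apply: (disjointFr H); rewrite !inE eqxx ?orbT.
apply/pred0P => z /=; rewrite !inE.
case: (eqVneq z x) => [->|_] /=; first by rewrite (negbTE Hx).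
case: (eqVneq z y) => [->|_] /=; first by rewrite (negbTE Hy).
by [].
Qed.

Lemma c2 : #|[set (inord 0 : 'I_5); inord 1]| == 2.
Proof. by rewrite cards2 -(inj_eq val_inj) /= !inordK // H3. Qed.

Definition v0 : T := exist (fun A : {set 'I_5} => #|A| == 2) _ c2.
Definition mkv (p : nat * nat) : T := insubd v0 [set (inord p.1 : 'I_5); inord p.2].
Definition prs : seq (nat * nat) :=
  [:: (0,1); (0,2); (0,3); (0,4); (1,2); (1,3); (1,4); (2,3); (2,4); (3,4)].
Definition vs : seq T := map mkv prs.
Definition vtx (i : nat) : T := nth v0 vs i.
Definition idx (v : T) : nat := index v vs.
Definition pd (p q : nat * nat) : bool :=
  [&& p.1 != q.1, p.1 != q.2, p.2 != q.1 & p.2 != q.2].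

Lemma prs_ok p : p \in prs -> [&& p.1 < 5, p.2 < 5 & p.1 != p.2].
Proof. by move=> Hp; have := allP (isT : all (fun p => [&& p.1 < 5, p.2 < 5 & p.1 != p.2]) prs) p Hp. Qed.

Lemma val_mkv p : p \in prs -> val (mkv p) = [set (inord p.1 : 'I_5); inord p.2].
Proof.
move=> /prs_ok /and3P [H1 H2 H3]; rewrite /mkv insubdK //.
change (#|[set (inord p.1 : 'I_5); inord p.2]| == 2).
by rewrite cards2 -(inj_eq val_inj) /= !inordK // H3.
Qed.

Lemma adj_mkv p q : p \in prs -> q \in prs -> e (mkv p) (mkv q) = pd p q.
Proof.
move=> Hp Hq; rewrite /petersen_adj !val_mkv // disj2 !inE.
move: (prs_ok Hp) (prs_ok Hq) => /and3P [H1 H2 _] /and3P [H3 H4 _].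
by rewrite -!val_eqE /= !inordK // /pd !negb_or !andbA.
Qed.

Lemma size_vs : size vs = 10.
Proof. by rewrite size_map. Qed.

Lemma vtxE i : i < 10 -> vtx i = mkv (nth (0,0) prs i).
Proof. by move=> Hi; rewrite /vtx (nth_map (0,0)). Qed.

Lemma adjb_ok : all (fun i => all (fun j => adjb i j == pd (nth (0,0) prs i) (nth (0,0) prs j)) (iota 0 10)) (iota 0 10).
Proof. by vm_compute. Qed.

Lemma e_vtx i j : i < 10 -> j < 10 -> e (vtx i) (vtx j) = adjb i j.
Proof.
move=> Hi Hj; rewrite !vtxE // adj_mkv ?mem_nth //.
have := allP adjb_ok i; rewrite mem_iota Hi => /(_ isT) /allP /(_ j).
by rewrite mem_iota Hj => /(_ isT) /eqP ->.
Qed.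

Lemma prs_sep : all (fun p => all (fun q => all (fun r => pd p r == pd q r) prs ==> (p == q)) prs) prs.
Proof. by vm_compute. Qed.

Lemma vs_uniq : uniq vs.
Proof.
rewrite /vs map_inj_in_uniq //.
move=> p q Hp Hq Heq.
apply/eqP; apply: (implyP (allP (allP prs_sep p Hp) q Hq)).
by apply/allP => r Hr; rewrite -!adj_mkv // Heq.
Qed.

Lemma prs_cov : all (fun a => all (fun b => (a != b) ==> ((a,b) \in prs) || ((b,a) \in prs)) (iota 0 5)) (iota 0 5).
Proof. by vm_compute. Qed.

Lemma vs_all v : v \in vs.
Proof.
have /cards2P [x [y [Hxy Hv]]] := valP v.
have Hx : val x \in iota 0 5 by rewrite mem_iota /= add0n ltn_ord.
have Hy : val y \in iota 0 5 by rewrite mem_iota /= add0n ltn_ord.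
have := allP (allP prs_cov (val x) Hx) (val y) Hy.
rewrite val_eqE Hxy /= => /orP [] H.
- suff -> : v = mkv (val x, val y) by apply: map_f.
  by apply: val_inj; rewrite val_mkv //= !inord_val.
- suff -> : v = mkv (val y, val x) by apply: map_f.
  by apply: val_inj; rewrite val_mkv //= !inord_val setUC.
Qed.

Lemma idx_lt v : idx v < 10.
Proof. by rewrite -size_vs index_mem vs_all. Qed.
Lemma vtx_idx v : vtx (idx v) = v.
Proof. by rewrite /vtx nth_index ?vs_all. Qed.
Lemma idx_vtx i : i < 10 -> idx (vtx i) = i.
Proof. by move=> Hi; rewrite /idx /vtx index_uniq ?size_vs ?vs_uniq. Qed.
Lemma vs_eq : vs = map vtx (iota 0 10).
Proof. by rewrite -size_vs /vtx -/(mkseq _ _) mkseq_nth. Qed.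

Definition mk (A : {set T}) : seq bool := [seq v \in A | v <- vs].

Lemma size_mk (A : {set T}) : size (mk A) = 10.
Proof. by rewrite size_map size_vs. Qed.
Lemma nth_mk (A : {set T}) i : i < 10 -> nth false (mk A) i = (vtx i \in A).
Proof. by move=> Hi; rewrite (nth_map v0) ?size_vs. Qed.

Lemma card_vs (A : {set T}) : #|A| = count (mem A) vs.
Proof.
rewrite -size_filter.
have Hu : uniq (filter (mem A) vs) by apply: filter_uniq; exact: vs_uniq.
rewrite -(card_uniqP Hu); apply: eq_card => x.
by rewrite mem_filter vs_all andbT.
Qed.

Lemma count_mk (A : {set T}) : count id (mk A) = #|A|.
Proof. by rewrite count_map card_vs. Qed.

Lemma orm_map (s : seq T) (f g : T -> bool) :
  orm (map f s) (map g s) = map (fun x => f x || g x) s.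
Proof. by elim: s => //= x s ->. Qed.

Lemma mk_orm (A B : {set T}) : orm (mk A) (mk B) = mk (A :|: B).
Proof. by rewrite /mk orm_map; apply: eq_map => v; rewrite in_setU. Qed.

Lemma mk_inj : injective mk.
Proof.
move=> A B H; apply/setP => v.
have := congr1 (fun M => nth false M (idx v)) H.
by rewrite /= !nth_mk ?idx_lt // vtx_idx.
Qed.

Lemma nbc_card (A : {set T}) v : nbc (mk A) (idx v) = #|nbhd e v :&: A|.
Proof.
rewrite card_vs (@eq_count _ _ (fun u => e v u && (u \in A))); last first.
  by move=> u; rewrite /= !inE.
rewrite vs_eq count_map /nbc; apply: eq_in_count => i.
rewrite mem_iota => /andP [_ Hi] /=.
by rewrite -{2}(vtx_idx v) e_vtx ?idx_lt // nth_mk.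
Qed.

Lemma mem_cs (A : {set T}) x : x \in cs (mk A) -> exists2 v, v \notin A & x = #|nbhd e v :&: A|.
Proof.
rewrite /cs => /mapP [w]; rewrite mem_filter mem_iota => /andP [Hn /andP [_ Hw]] ->.
exists (vtx w); first by rewrite -nth_mk.
by rewrite -nbc_card idx_vtx.
Qed.

Lemma cs_mem (A : {set T}) v : v \notin A -> #|nbhd e v :&: A| \in cs (mk A).
Proof.
move=> Hv; rewrite -nbc_card; apply: map_f.
by rewrite mem_filter mem_iota nth_mk ?idx_lt // vtx_idx Hv /=.
Qed.

Lemma fdP (A : {set T}) : reflect (fair_dominating e A) (fdm (mk A)).
Proof.
apply: (iffP idP).
- rewrite /fdm /=; case E: (cs (mk A)) => [|c r] H.
  + exists 1; split => //; split.
    * by move=> v Hv; have := cs_mem Hv; rewrite E.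
    * by move=> v Hv; have := cs_mem Hv; rewrite E.
  + have Hx : forall v, v \notin A -> #|nbhd e v :&: A| = c /\ 0 < #|nbhd e v :&: A|.
      move=> v Hv; have := cs_mem Hv; rewrite E => /(allP H) /andP [/eqP -> Hp].
      by split.
    have [v Hv] : exists v, v \notin A.
      have : c \in cs (mk A) by rewrite E mem_head.
      by case/mem_cs => v Hv _; exists v.
    exists c; split; first by have [<- ->] := Hx v Hv.
    split; last by move=> u Hu; case: (Hx u Hu).
    move=> u Hu; have [_ /card_gt0P [w]] := Hx u Hu.
    by rewrite !inE => /andP [Hw1 Hw2]; exists w.
- move=> [k [Hk1 [Hdom Hk]]].
  have Hall : forall x, x \in cs (mk A) -> x = k.
    by move=> x /mem_cs [v Hv ->]; apply: Hk.
  rewrite /fdm /=; case E: (cs (mk A)) => [|c r] //.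
  apply/allP => x Hx /=.
  rewrite (Hall x) ?E // (Hall c) ?E ?mem_head //.
  by rewrite eqxx Hk1.
Qed.

Definition bl (l : seq nat) : seq bool := [seq i \in l | i <- iota 0 10].
Definition L4 : seq (seq bool) := [:: bl [:: 0]; bl [:: 1; 3; 5; 6; 7; 8; 9]; bl [:: 2]; bl [:: 4]].

Definition unm (M : seq bool) : {set T} := [set v | nth false M (idx v)].

Lemma mk_unm M : size M = 10 -> mk (unm M) = M.
Proof.
move=> HM; rewrite /mk vs_eq -map_comp.
rewrite -{2}(mkseq_nth false M) HM /mkseq; apply/eq_in_map => i.
by rewrite mem_iota => /andP [_ Hi] /=; rewrite inE idx_vtx.
Qed.

Lemma nth_dism M N k : dism M N -> ~~ (nth false M k && nth false N k).
Proof.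
elim: M N k => [|a M IH] [|b N] [|k] //=; try by rewrite ?andbF.
  by case/andP.
by case/andP => _ /IH.
Qed.

Lemma L4_ok :
  [&& all (fun M => size M == 10) L4, uniq L4,
      all (fun M => all (fun N => (M == N) || dism M N) L4) L4,
      all (fun i => has (fun M => nth false M i) L4) (iota 0 10),
      all (has id) L4 &
      all (fun M => ~~ fdm M && has (fun N => (N != M) && ~~ fdm N && fdm (orm M N)) L4) L4].
Proof. by vm_compute. Qed.

Theorem theorem3p3 : is_fair_coalition_number petersen_adj 4.
Proof.
have /and5P [Hsz HuL Hdis Hcov /andP [Hne Hok]] := L4_ok.
have Hsz' : forall M, M \in L4 -> size M = 10 by move=> M /(allP Hsz) /eqP.
have Hdis' : forall M N, M \in L4 -> N \in L4 -> M != N -> [disjoint unm M & unm N].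
  move=> M N HM HN HMN; have := allP (allP Hdis M HM) N HN; rewrite (negbTE HMN) /= => HD.
  apply/pred0P => v /=; rewrite !inE.
  by apply/negbTE/nth_dism.
have unm_inj : {in L4 &, injective unm}.
  by move=> M N HM HN H; rewrite -(mk_unm (Hsz' _ HM)) -(mk_unm (Hsz' _ HN)) H.
split.
- exists [set:: map unm L4]; split; last first.
    rewrite cardsE; apply/card_uniqP; by rewrite map_inj_in_uniq.
  split.
  + apply/and3P; split.
    * apply/eqP/setP => v; rewrite in_setT; apply/bigcupP.
      have Hi : idx v \in iota 0 10 by rewrite mem_iota /= idx_lt.
      have /hasP [M HM HMv] := allP Hcov _ Hi.
      by exists (unm M); rewrite inE // map_f.
    * apply/trivIsetP => A B HA HB; move: HA HB; rewrite !in_set => /mapP [M HM ->] /mapP [N HN ->] HAB.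
      apply: Hdis' => //; apply: contraNneq HAB => ->; by [].
    * rewrite inE; apply/mapP => -[M HM H0].
      have /hasP [b Hb Hbt] := allP Hne M HM.
      have Hk : index true M < 10 by rewrite -(Hsz' _ HM) index_mem -Hbt.
      have : vtx (index true M) \in unm M by rewrite inE idx_vtx // nth_index // -Hbt.
      by rewrite -H0 inE.
  + move=> A; rewrite inE => /mapP [M HM ->]; right.
    have /andP [HnF /hasP [N HN /andP [/andP [HNM HnFN] HFU]]] := allP Hok M HM.
    split; first by apply/fdP; rewrite mk_unm ?Hsz'.
    exists (unm N); first by rewrite inE map_f.
    split; first by apply: contra_neq HNM; apply: unm_inj.
    split; first by apply: Hdis' => //; rewrite eq_sym.
    split; first by apply/fdP; rewrite mk_unm ?Hsz'.
    split; first by apply/fdP; rewrite mk_unm ?Hsz'.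
    by apply/fdP; rewrite -mk_orm !mk_unm ?Hsz'.
- move=> P [Hpart Hblk]; case/and3P: Hpart => /eqP Hcv Htriv H0.
  rewrite leqNgt; apply/negP => Hgt.
  set L := map mk (enum P).
  have : chkf fdm L.
    apply: no_big.
    + by rewrite map_inj_uniq ?enum_uniq //; apply: mk_inj.
    + by move=> M /mapP [A _ ->]; rewrite size_mk.
    + move=> M /mapP [A HA ->]; rewrite mem_enum in HA.
      have : A != set0 by apply: contraNneq H0 => <-.
      case/set0Pn => v Hv; exists (idx v); by rewrite nth_mk ?idx_lt // vtx_idx.
    + move=> M N /mapP [A HA ->] /mapP [B HB ->] HMN k HA' HB'.
      rewrite mem_enum in HA; rewrite mem_enum in HB.
      have Hk : k < 10 by rewrite -(size_mk A); exact: nth_true_lt.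
      have HAB : A != B by apply: contra_neq HMN => ->.
      have := (elimT trivIsetP Htriv) A B HA HB HAB.
      rewrite nth_mk // in HA'; rewrite nth_mk // in HB'.
      by move/disjointFr => /(_ _ HA'); rewrite HB'.
    + move=> k Hk; exists (mk (pblock P (vtx k))).
        by apply: map_f; rewrite mem_enum; apply: pblock_mem; rewrite Hcv inE.
      by rewrite nth_mk // mem_pblock Hcv inE.
  rewrite /chkf size_map -cardE ltnNge Hgt /=.
  move/negP; apply; apply/allP => M /mapP [A HA ->]; rewrite mem_enum in HA.
  case: (Hblk A HA) => [[H1 HF] | [HnF [B HB [HBA Hco]]]].
  + by rewrite /okb count_mk H1 eqxx andbT; apply/orP; left; apply/fdP.
  + apply/orP; right; apply/andP; split; first by apply/fdP.
    case: Hco => _ [_ [HnFB HFU]].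
    apply/hasP; exists (mk B); first by apply: map_f; rewrite mem_enum.
    rewrite mk_orm; apply/andP; split; last by apply/fdP.
    apply/andP; split; last by apply/fdP.
    by apply: contra_neq HBA; apply: mk_inj.
Qed.
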